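(* Assume $\Omega^*\neq\emptyset$, let $\sigma\in[0,c]$, and let an initial point $\omega_0=(Z_0,E_0,-\lambda_0)$ be given. Then there exist parameters $(W_k,\theta_k,\beta_k)\in\mathcal{S}(\sigma,A)$, $k\ge0$, such that the sequence $\{\omega_k\}$ generated by the iteration below converges to a solution $\omega^*\in\Omega^*$.
   Context: Let $A\in\mathbb{R}^{m\times d}$, $X\in\mathbb{R}^{m\times n}$, and let $f:\mathbb{R}^{d\times n}\to\mathbb{R}$, $g:\mathbb{R}^{m\times n}\to\mathbb{R}$ be convex. Consider the problem $\min_{Z,E} f(Z)+g(E)$ subject to $X=AZ+E$. Triples are written $\omega=(Z,E,-\lambda)$ with $\lambda\in\mathbb{R}^{m\times n}$ a Lagrange multiplier. $\Omega^*$ is the solution set: the set of $\omega^*=(Z^*,E^*,-\lambda^* )$ with $0\in\partial f(Z^* )+A^\top\lambda^*$, $0\in\partial g(E^* )+\lambda^*$, $AZ^*+E^*=X$. $\circ$ is the Hadamard product; $\beta^{-1}$ is the entrywise reciprocal; $\tfrac{\theta}{2}\circ\|M\|_F^2:=\tfrac12\sum_{ij}\theta_{ij}M_{ij}^2$. Iteration (D-LADMM), with parameters $W_k\in\mathbb{R}^{m\times d}$, $\theta_k\in\mathbb{R}^{d\times n}$, $\beta_k\in\mathbb{R}^{m\times n}$: $Z_{k+1}=\arg\min_Z\{ f(Z)+\tfrac{\theta_k}{2}\circ\|Z-Z_k+\theta_k^{-1}\circ W_k^\top(\lambda_k+\beta_k\circ(AZ_k+E_k-X))\|_F^2\}$,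 $E_{k+1}=\arg\min_E\{g(E)+\tfrac{\beta_k}{2}\circ\|E-X+AZ_{k+1}+\beta_k^{-1}\circ\lambda_k\|_F^2\}$, $\lambda_{k+1}=\lambda_k+\beta_k\circ(AZ_{k+1}+E_{k+1}-X)$. $\mathcal{S}(\sigma,A)$ is the set of $(W,\theta,\beta)$ with $\|W-A\|\le\sigma$ (spectral norm), $\theta,\beta$ entrywise positive, and $Z\mapsto\theta\circ Z-W^\top(\beta\circ(AZ))$ positive definite ($\langle\cdot(Z),Z\rangle>0$ for $Z\neq0$). Standing assumption: there is a constant $c$ such that $\mathcal{S}(\sigma,A)\ne\emptyset$ for all $0\le\sigma\le c$. *)

(* Defs.v *)
From HB Require Import structures.
From mathcomp Require Import all_boot all_order all_algebra.
From mathcomp Require Import all_classical all_reals all_analysis.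
Set Implicit Arguments. Unset Strict Implicit. Unset Printing Implicit Defensive.
Import Order.TTheory GRing.Theory Num.Theory.
Import numFieldNormedType.Exports.
Local Open Scope ring_scope.

Section DLADMM.
Variable R : realType.

Definition hadm (p q : nat) (M N : 'M[R]_(p, q)) : 'M[R]_(p, q) := map2_mx *%R M N.
Definition einv (p q : nat) (M : 'M[R]_(p, q)) : 'M[R]_(p, q) := map_mx (fun x => x^-1) M.
Definition frob (p q : nat) (M N : 'M[R]_(p, q)) : R := \sum_i \sum_j M i j * N i j.
Definition wsq (p q : nat) (th M : 'M[R]_(p, q)) : R :=
  2^-1 * \sum_i \sum_j th i j * (M i j) ^+ 2.
Definition vnorm2 (p : nat) (x : 'cV[R]_p) : R := Num.sqrt (\sum_i (x i 0) ^+ 2).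
Definition specnorm_le (p q : nat) (M : 'M[R]_(p, q)) (s : R) : Prop :=
  forall x : 'cV[R]_q, vnorm2 (M *m x) <= s * vnorm2 x.
Definition convex_fun (p q : nat) (f : 'M[R]_(p, q) -> R) : Prop :=
  forall (X Y : 'M[R]_(p, q)) (t : R), 0 <= t -> t <= 1 ->
    f (t *: X + (1 - t) *: Y) <= t * f X + (1 - t) * f Y.
Definition subgrad (p q : nat) (f : 'M[R]_(p, q) -> R) (Z G : 'M[R]_(p, q)) : Prop :=
  forall Y, f Z + frob G (Y - Z) <= f Y.

Definition in_S (m d n : nat) (sigma : R) (A : 'M[R]_(m, d))
  (W : 'M[R]_(m, d)) (th : 'M[R]_(d, n)) (be : 'M[R]_(m, n)) : Prop :=
  [/\ specnorm_le (W - A) sigma,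
      (forall i j, 0 < th i j),
      (forall i j, 0 < be i j) &
      (forall Z : 'M[R]_(d, n), Z != 0 ->
         0 < frob (hadm th Z - W^T *m hadm be (A *m Z)) Z)].

(* (Z, E, -lambda) belongs to Omega^* *)
Definition in_Omega (m d n : nat) (f : 'M[R]_(d, n) -> R) (g : 'M[R]_(m, n) -> R)
  (A : 'M[R]_(m, d)) (X : 'M[R]_(m, n))
  (Z : 'M[R]_(d, n)) (E : 'M[R]_(m, n)) (lam : 'M[R]_(m, n)) : Prop :=
  [/\ (exists G, subgrad f Z G /\ G + A^T *m lam = 0),
      (exists H, subgrad g E H /\ H + lam = 0) &
      A *m Z + E = X].

Definition dladmm_step (m d n : nat) (f : 'M[R]_(d, n) -> R) (g : 'M[R]_(m, n) -> R)
  (A : 'M[R]_(m, d)) (X : 'M[R]_(m, n))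
  (W : 'M[R]_(m, d)) (th : 'M[R]_(d, n)) (be : 'M[R]_(m, n))
  (Z : 'M[R]_(d, n)) (E : 'M[R]_(m, n)) (lam : 'M[R]_(m, n))
  (Z' : 'M[R]_(d, n)) (E' : 'M[R]_(m, n)) (lam' : 'M[R]_(m, n)) : Prop :=
  let shiftZ := hadm (einv th) (W^T *m (lam + hadm be (A *m Z + E - X))) in
  let FZ := fun Y => f Y + wsq th (Y - Z + shiftZ) in
  let GE := fun Y => g Y + wsq be (Y - X + A *m Z' + hadm (einv be) lam) in
  [/\ (forall Y, FZ Z' <= FZ Y),
      (forall Y, GE E' <= GE Y) &
      lam' = lam + hadm be (A *m Z' + E' - X)].

End DLADMM.

(* Main.v *)
Set Warnings "-all".
Require Import Defs.
From HB Require Import structures.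
From mathcomp Require Import all_boot all_order all_algebra.
From mathcomp Require Import all_classical all_reals all_analysis.
From mathcomp Require Import ring lra.
Import Order.TTheory GRing.Theory Num.Theory.
Import numFieldNormedType.Exports.
Local Open Scope classical_set_scope.
Local Open Scope ring_scope.
Set Implicit Arguments. Unset Strict Implicit. Unset Printing Implicit Defensive.
Lemma frobC (R : realType) p q (M N : 'M[R]_(p,q)) : frob M N = frob N M.
Proof. by apply: eq_bigr => i _; apply: eq_bigr => j _; rewrite mulrC. Qed.

Lemma frobDl (R : realType) p q (M N P : 'M[R]_(p,q)) :
  frob (M + N) P = frob M P + frob N P.
Proof.
rewrite /frob -big_split; apply: eq_bigr => i _; rewrite -big_split.
by apply: eq_bigr => j _; rewrite mxE mulrDl.
Qed.

Lemma frobZl (R : realType) p q a (M P : 'M[R]_(p,q)) :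
  frob (a *: M) P = a * frob M P.
Proof.
rewrite /frob mulr_sumr; apply: eq_bigr => i _; rewrite mulr_sumr.
by apply: eq_bigr => j _; rewrite mxE mulrA.
Qed.

Lemma frobNl (R : realType) p q (M P : 'M[R]_(p,q)) : frob (- M) P = - frob M P.
Proof. by rewrite -scaleN1r frobZl mulN1r. Qed.

Lemma frobBl (R : realType) p q (M N P : 'M[R]_(p,q)) :
  frob (M - N) P = frob M P - frob N P.
Proof. by rewrite frobDl frobNl. Qed.

Lemma frobDr (R : realType) p q (M N P : 'M[R]_(p,q)) :
  frob P (M + N) = frob P M + frob P N.
Proof. by rewrite frobC frobDl ![frob _ P]frobC. Qed.
Lemma frobZr (R : realType) p q a (M P : 'M[R]_(p,q)) :
  frob P (a *: M) = a * frob P M.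
Proof. by rewrite frobC frobZl frobC. Qed.
Lemma frobNr (R : realType) p q (M P : 'M[R]_(p,q)) : frob P (- M) = - frob P M.
Proof. by rewrite frobC frobNl frobC. Qed.
Lemma frobBr (R : realType) p q (M N P : 'M[R]_(p,q)) :
  frob P (M - N) = frob P M - frob P N.
Proof. by rewrite frobDr frobNr. Qed.
Lemma frob0l (R : realType) p q (P : 'M[R]_(p,q)) : frob 0 P = 0.
Proof. by rewrite -(scale0r 0) frobZl mul0r. Qed.
Lemma frob0r (R : realType) p q (P : 'M[R]_(p,q)) : frob P 0 = 0.
Proof. by rewrite frobC frob0l. Qed.

Lemma frob_ge0 (R : realType) p q (M : 'M[R]_(p,q)) : 0 <= frob M M.
Proof. by apply: sumr_ge0 => i _; apply: sumr_ge0 => j _; by rewrite -expr2 sqr_ge0. Qed.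

Lemma frob_eq0 (R : realType) p q (M : 'M[R]_(p,q)) : frob M M = 0 -> M = 0.
Proof.
move=> /eqP; rewrite psumr_eq0; last by move=> i _; apply: sumr_ge0 => j _; by rewrite -expr2 sqr_ge0.
move=> /allP H; apply/matrixP => i j; rewrite mxE.
have := H i (mem_index_enum i); rewrite psumr_eq0; last by move=> k _; by rewrite -expr2 sqr_ge0.
by move=> /allP /(_ j (mem_index_enum j)) /=; rewrite mulf_eq0 orbb => /eqP.
Qed.

Lemma frob_entry (R : realType) p q (M : 'M[R]_(p,q)) i j : M i j ^+ 2 <= frob M M.
Proof.
rewrite /frob (bigD1 i) //= (bigD1 j) //= -expr2 -addrA lerDl.
apply: addr_ge0; first by apply: sumr_ge0 => k _; by rewrite -expr2 sqr_ge0.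
by apply: sumr_ge0 => k _; apply: sumr_ge0 => l _; by rewrite -expr2 sqr_ge0.
Qed.

Lemma frob_tr (R : realType) p q (M N : 'M[R]_(p,q)) : frob M N = \tr (M^T *m N).
Proof.
rewrite /mxtrace /frob exchange_big; apply: eq_bigr => j _; rewrite mxE.
by apply: eq_bigr => i _; rewrite mxE.
Qed.

Lemma frob_adj (R : realType) m d n (A : 'M[R]_(m,d)) (L : 'M[R]_(m,n)) (Z : 'M[R]_(d,n)) :
  frob (A^T *m L) Z = frob L (A *m Z).
Proof. by rewrite !frob_tr trmx_mul trmxK mulmxA. Qed.

Lemma frob_CS (R : realType) p q (M N : 'M[R]_(p,q)) :
  frob M N ^+ 2 <= frob M M * frob N N.
Proof.
have [/frob_eq0 ->|nz] := eqVneq (frob M M) 0.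
  by rewrite !frob0l expr0n /= mul0r.
have pos : 0 < frob M M by rewrite lt0r nz frob_ge0.
set s := frob M N / frob M M.
have := frob_ge0 (s *: M - N).
rewrite frobBl !frobBr !frobZl !frobZr (frobC N M) => h.
have e : s * (s * frob M M) = frob M N ^+ 2 / frob M M.
  by rewrite /s; field; exact: nz.
rewrite e in h.
have h2 : 0 <= frob M M * (frob M N ^+ 2 / frob M M - s * frob M N - (s * frob M N - frob N N)).
  by apply: mulr_ge0 => //; exact: ltW.
have e2 : frob M M * (frob M N ^+ 2 / frob M M - s * frob M N - (s * frob M N - frob N N))
   = frob M M * frob N N - frob M N ^+ 2.
  by rewrite /s; field; exact: nz.
by rewrite e2 subr_ge0 in h2.
Qed.
Lemma frob_mul_le (R : realType) m d n (A : 'M[R]_(m,d)) (Z : 'M[R]_(d,n)) :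
  frob (A *m Z) (A *m Z) <= frob A A * frob Z Z.
Proof.
have ent : forall i j, (A *m Z) i j = frob (row i A) (col j Z)^T.
  by move=> i j; rewrite mxE /frob big_ord1; apply: eq_bigr => k _; rewrite !mxE.
have rA : frob A A = \sum_i frob (row i A) (row i A).
  by apply: eq_bigr => i _; rewrite /frob big_ord1; apply: eq_bigr => k _; rewrite !mxE.
have cZ : frob Z Z = \sum_j frob (col j Z)^T (col j Z)^T.
  rewrite /frob exchange_big; apply: eq_bigr => j _; rewrite big_ord1.
  by apply: eq_bigr => k _; rewrite !mxE.
rewrite rA cZ mulr_suml; apply: ler_sum => i _; rewrite mulr_sumr; apply: ler_sum => j _.
by rewrite ent -expr2 frob_CS.
Qed.
Lemma small_pos (R : realType) (x w : R) : 0 <= w ->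
  (forall s, 0 < s -> s <= 1 -> 0 <= x + s * w) -> 0 <= x.
Proof.
move=> w0 H; rewrite leNgt; apply/negP => x0.
have D0 : 0 < - x + w + 1 by lra.
set s := - x / (- x + w + 1).
have sD : s * (- x + w + 1) = - x by rewrite /s; field; lra.
have s0 : 0 < s by rewrite /s; apply: divr_gt0; lra.
have s1 : s <= 1 by rewrite /s ler_pdivrMr //; lra.
have := H s s0 s1 => h.
have : 0 <= (x + s * w) * (- x + w + 1) by apply: mulr_ge0 => //; lra.
nra.
Qed.

Lemma frob_sq_add (R : realType) p q (M N : 'M[R]_(p,q)) :
  frob (M + N) (M + N) = frob M M + 2 * frob M N + frob N N.
Proof. rewrite frobDl !frobDr (frobC N M); ring. Qed.

Lemma opt_subgrad (R : realType) p q (f : 'M[R]_(p,q) -> R) (a : R) (C Z' : 'M[R]_(p,q)) :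
  convex_fun f -> 0 <= a ->
  (forall Y, f Z' + a / 2 * frob (Z' - C) (Z' - C) <= f Y + a / 2 * frob (Y - C) (Y - C)) ->
  subgrad f Z' (a *: (C - Z')).
Proof.
move=> cf a0 H Y; set D := Y - Z'.
suff : 0 <= f Y - f Z' + a * frob (Z' - C) D.
  have -> : frob (a *: (C - Z')) D = - (a * frob (Z' - C) D).
    rewrite frobZl -mulrN -frobNl; congr (_ * frob _ _).
    by apply/matrixP => i j; rewrite !mxE; ring.
  lra.
apply: (@small_pos _ _ (a / 2 * frob D D)).
  by apply: mulr_ge0; [apply: mulr_ge0 => //; lra | exact: frob_ge0].
move=> s s0 s1.
have Hc := cf Y Z' s (ltW s0) s1.
have Hm := H (s *: Y + (1 - s) *: Z').
have eq : s *: Y + (1 - s) *: Z' - C = (Z' - C) + s *: D.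
  by apply/matrixP => i j; rewrite /D !mxE; ring.
set u := frob (Z' - C) (Z' - C) in Hm *.
rewrite eq frob_sq_add frobZr frobZl frobZr in Hm.
set v := frob (Z' - C) D in Hm *.
set w := frob D D in Hm *.
set fs := f _ in Hc Hm.
rewrite -/u in Hm; clearbody u v w fs.
have e : s * (f Y - f Z' + a * v + s * (a / 2 * w)) = (s * f Y + (1 - s) * f Z' - f Z') + a / 2 * (2 * (s * v) + s * (s * w)) by field.
have : 0 <= s * (f Y - f Z' + a * v + s * (a / 2 * w)) by rewrite e; lra.
by rewrite pmulr_rge0.
Qed.
Lemma sum_const_seq (V : zmodType) (I : Type) (s : seq I) (c : V) :
  \sum_(x <- s) c = c *+ size s.
Proof. by elim: s => [|x s IH]; rewrite ?big_nil ?big_cons ?IH ?mulrS. Qed.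

Lemma jensen_seq (R : realType) p q (f : 'M[R]_(p,q) -> R) (I : Type) (s : seq I)
  (F : I -> 'M[R]_(p,q)) : convex_fun f -> (0 < size s)%N ->
  f ((size s)%:R^-1 *: \sum_(x <- s) F x) <= (size s)%:R^-1 * \sum_(x <- s) f (F x).
Proof.
move=> cf; elim: s => [|x s IH] hs; first by []; clear hs.
case: s IH => [_|y s IH].
  by rewrite /= !big_cons !big_nil !addr0 invr1 scale1r mul1r.
have hn0 : (0 < size (y :: s))%N by [].
have IH' := IH hn0; clear IH; move: (y :: s) hn0 IH' => s' hn0 IH.
set n := size s' in IH hn0 *.
have nr : (n%:R : R) != 0 by rewrite pnatr_eq0 -lt0n.
have n1 : (n.+1%:R : R) != 0 by rewrite pnatr_eq0.
rewrite /= -/n !big_cons.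
set t := (n.+1%:R : R)^-1.
have t0 : 0 <= t by rewrite /t invr_ge0.
have t1 : t <= 1 by rewrite /t invf_le1 // ?ler1n // ltr0n.
have eq : t *: (F x + \sum_(j <- s') F j) = t *: F x + (1 - t) *: (n%:R^-1 *: \sum_(j <- s') F j).
  apply/matrixP => i j; rewrite !mxE /t -natr1; field.
  by rewrite nr natr1 pnatr_eq0.
rewrite eq; apply: le_trans (cf _ _ _ t0 t1) _.
have e1t : 1 - t = n%:R * t by rewrite /t -natr1; field; rewrite natr1 pnatr_eq0.
rewrite mulrDr lerD2l e1t.
apply: (@le_trans _ _ (n%:R * t * (n%:R^-1 * \sum_(j <- s') f (F j)))).
  by rewrite -!mulrA; apply: ler_wpM2l; [rewrite ler0n | apply: ler_wpM2l].
by rewrite le_eqVlt; apply/orP; left; apply/eqP; field.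
Qed.
Lemma convex_seg (R : realType) p q (f : 'M[R]_(p,q) -> R) (Z0 D : 'M[R]_(p,q)) (a : R) :
  convex_fun f -> `|a| <= 1 ->
  f (Z0 + a *: D) <= f Z0 + `|a| * (`|f (Z0 + D) - f Z0| + `|f (Z0 - D) - f Z0|).
Proof.
move=> cf a1.
have aux : forall (b : R) (P : 'M[R]_(p,q)), 0 <= b -> b <= 1 ->
    f (b *: P + (1 - b) *: Z0) <= f Z0 + b * `|f P - f Z0|.
  move=> b P b0 b1; apply: le_trans (cf _ _ _ b0 b1) _.
  have : b * (f P - f Z0) <= b * `|f P - f Z0| by apply: ler_wpM2l => //; exact: ler_norm.
  lra.
have c0 : 0 <= `|f (Z0 + D) - f Z0| by [].
have c1 : 0 <= `|f (Z0 - D) - f Z0| by [].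
have [a0|a0] := leP 0 a.
  have e : Z0 + a *: D = a *: (Z0 + D) + (1 - a) *: Z0.
    by apply/matrixP => i j; rewrite !mxE; ring.
  rewrite e; apply: le_trans (aux _ _ a0 _) _; first by move: a1; rewrite ger0_norm.
  by rewrite (ger0_norm a0) lerD2l ler_wpM2l // lerDl.
have e : Z0 + a *: D = (- a) *: (Z0 - D) + (1 - - a) *: Z0.
  by apply/matrixP => i j; rewrite !mxE; ring.
have a0' : 0 <= - a by lra.
rewrite e; apply: le_trans (aux _ _ a0' _) _; first by move: a1; rewrite ltr0_norm.
by rewrite (ltr0_norm a0) lerD2l ler_wpM2l // lerDr.
Qed.

Lemma convex_usc (R : realType) p q (f : 'M[R]_(p,q) -> R) (Z0 : 'M[R]_(p,q)) :
  convex_fun f -> forall e : R, 0 < e -> exists eta : R, 0 < eta /\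
  forall h : 'M[R]_(p,q), (forall i j, `|h i j| <= eta) -> f (Z0 + h) <= f Z0 + e.
Proof.
move=> cf eps e0.
set s := index_enum {: 'I_p * 'I_q}.
have hE : forall h : 'M[R]_(p,q), h = \sum_(x <- s) h x.1 x.2 *: delta_mx x.1 x.2.
  by move=> h; rewrite {1}(matrix_sum_delta h) pair_bigA.
set c := fun x : 'I_p * 'I_q => `|f (Z0 + delta_mx x.1 x.2) - f Z0| + `|f (Z0 - delta_mx x.1 x.2) - f Z0|.
have c0 : forall x, 0 <= c x by move=> x; rewrite /c addr_ge0.
set C := \sum_(x <- s) c x.
have C0 : 0 <= C by rewrite /C sumr_ge0.
set N := size s.
have [N0|Npos] := eqVneq N 0%N.
  exists 1; split => // h _.
  have -> : h = 0 by rewrite (hE h); move: N0; rewrite /N => /size0nil ->; rewrite big_nil.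
  by rewrite addr0 lerDl ltW.
have Nr : (N%:R : R) != 0 by rewrite pnatr_eq0.
have Nr0 : (0 : R) < N%:R by rewrite ltr0n lt0n.
set e1 := Order.min 1 eps.
have e10 : 0 < e1 by rewrite /e1 lt_min ltr01 e0.
have e11 : e1 <= 1 by rewrite /e1 ge_min lexx.
have e1e : e1 <= eps by rewrite /e1 ge_min lexx orbT.
exists (e1 / ((N%:R + 1) * (C + 1))); split.
  by apply: divr_gt0 => //; apply: mulr_gt0; lra.
move=> h hb.
set eta := e1 / ((N%:R + 1) * (C + 1)) in hb.
have eta0 : 0 <= eta by apply: divr_ge0; [lra | apply: mulr_ge0; lra].
have Neta : N%:R * eta <= 1.
  rewrite /eta mulrA ler_pdivrMr; last by apply: mulr_gt0; lra.
  rewrite mul1r; have : N%:R * e1 <= N%:R * 1 by apply: ler_wpM2l; lra.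
  nra.
have etaC : eta * C <= eps.
  rewrite /eta mulrAC ler_pdivrMr; last by apply: mulr_gt0; lra.
  have h1 : e1 * C <= eps * C by apply: ler_wpM2r.
  have h2 : C <= (N%:R + 1) * (C + 1) by nra.
  have h3 : eps * C <= eps * ((N%:R + 1) * (C + 1)) by apply: ler_wpM2l => //; lra.
  lra.
have eqm : Z0 + h = N%:R^-1 *: \sum_(x <- s) (Z0 + (N%:R * h x.1 x.2) *: delta_mx x.1 x.2).
  rewrite big_split /= sum_const_seq -/N -[Z0 *+ N]scaler_nat.
  under eq_bigr => x _ do rewrite -scalerA.
  by rewrite -scaler_sumr -(hE h) -scalerDr scalerA mulVf // scale1r.
have Npos' : (0 < size s)%N by rewrite lt0n.
rewrite eqm; apply: le_trans (@jensen_seq _ _ _ f _ s (fun x => Z0 + (N%:R * h x.1 x.2) *: delta_mx x.1 x.2) cf Npos') _.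
apply: (@le_trans _ _ (N%:R^-1 * \sum_(x <- s) (f Z0 + N%:R * `|h x.1 x.2| * c x))).
  apply: ler_wpM2l; first by rewrite invr_ge0 ltW.
  apply: ler_sum => x _.
  have hx := hb x.1 x.2.
  have := @convex_seg _ _ _ f Z0 (delta_mx x.1 x.2) (N%:R * h x.1 x.2) cf.
  rewrite normrM (ger0_norm (ltW Nr0)) => H; apply: H.
  apply: le_trans Neta; apply: ler_wpM2l => //; lra.
rewrite big_split /= sum_const_seq -/N mulrDr -[f Z0 *+ N]mulr_natr mulrCA mulVf // mulr1.
rewrite lerD2l mulr_sumr.
apply: (@le_trans _ _ (\sum_(x <- s) eta * c x)); last by rewrite -mulr_sumr.
apply: ler_sum => x _; rewrite !mulrA mulVf // mul1r; apply: ler_wpM2r => //.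
Qed.

Lemma convex_lsc (R : realType) p q (f : 'M[R]_(p,q) -> R) (Z0 : 'M[R]_(p,q)) :
  convex_fun f -> forall e : R, 0 < e -> exists eta : R, 0 < eta /\
  forall Z : 'M[R]_(p,q), (forall i j, `|Z i j - Z0 i j| <= eta) -> f Z0 <= f Z + e.
Proof.
move=> cf e e0; have [eta [eta0 H]] := convex_usc Z0 cf e0.
exists eta; split => // Z hZ.
have H' : f (Z0 + (Z0 - Z)) <= f Z0 + e.
  by apply: H => i j; rewrite !mxE distrC.
have t0 : (0 : R) <= 2^-1 by rewrite invr_ge0.
have t1 : (2 : R)^-1 <= 1 by rewrite invf_le1 // ler1n.
have := cf Z (Z0 + (Z0 - Z)) _ t0 t1.
have -> : 2^-1 *: Z + (1 - 2^-1) *: (Z0 + (Z0 - Z)) = Z0.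
  by apply/matrixP => i j; rewrite !mxE; field.
have -> : (1 - 2^-1 : R) = 2^-1 by field.
lra.
Qed.
Definition Qf (R : realType) m d n (A : 'M[R]_(m,d)) (t : R) (Z : 'M[R]_(d,n)) (E L : 'M[R]_(m,n)) : R :=
  t * frob Z Z - frob (A *m Z) (A *m Z) + frob E E + frob L L.

Lemma frob_sq_sub (R : realType) p q (M N : 'M[R]_(p,q)) :
  frob (M - N) (M - N) = frob M M - 2 * frob M N + frob N N.
Proof. rewrite frobBl !frobBr (frobC N M); ring. Qed.

Lemma subgrad_mono (R : realType) p q (f : 'M[R]_(p,q) -> R) Z1 Z2 G1 G2 :
  subgrad f Z1 G1 -> subgrad f Z2 G2 -> 0 <= frob (G1 - G2) (Z1 - Z2).
Proof.
move=> h1 h2; have := h1 Z2; have := h2 Z1.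
have -> : Z2 - Z1 = - (Z1 - Z2) by rewrite opprB.
rewrite frobNr frobBl; lra.
Qed.

Lemma fejer_core (R : realType) m d n (A : 'M[R]_(m,d)) (t : R)
  (z dz : 'M[R]_(d,n)) (e de l dl : 'M[R]_(m,n)) :
  dl = A *m z + e ->
  0 <= frob (- (t *: dz) - A^T *m (l - A *m dz - de)) z ->
  0 <= frob (- l) e ->
  0 <= frob (- dl) de ->
  0 <= Qf A t (z - dz) (e - de) (l - dl) - Qf A t z e l - Qf A t dz de dl.
Proof.
move=> -> M1 M2 M3.
rewrite frobBl frobNl frobZl frob_adj in M1.
rewrite /Qf mulmxBr !frob_sq_sub.
move: M1 M2 M3; set Az := A *m z; set Adz := A *m dz => M1 M2 M3.
rewrite !frob_sq_add frobDr.
rewrite !frobBl in M1; rewrite frobNl in M2; rewrite frobNl frobDl in M3.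
rewrite ?[frob dz z]frobC ?[frob Adz Az]frobC ?[frob e Az]frobC ?[frob de Az]frobC
  ?[frob l Az]frobC ?[frob e l]frobC ?[frob de e]frobC ?[frob de l]frobC in M1 M2 M3 *.
nra.
Qed.
Lemma hadm_const (R : realType) p q (a : R) (M : 'M[R]_(p,q)) : hadm (const_mx a) M = a *: M.
Proof. by apply/matrixP => i j; rewrite !mxE. Qed.
Lemma einv_const (R : realType) p q (a : R) : einv (const_mx a : 'M[R]_(p,q)) = const_mx a^-1.
Proof. by apply/matrixP => i j; rewrite !mxE. Qed.
Lemma wsq_const (R : realType) p q (a : R) (M : 'M[R]_(p,q)) : wsq (const_mx a) M = a / 2 * frob M M.
Proof.
rewrite /wsq /frob !mulr_sumr; apply: eq_bigr => i _.
rewrite !mulr_sumr; apply: eq_bigr => j _; rewrite !mxE; ring.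
Qed.

Lemma step_props (R : realType) m d n (f : 'M[R]_(d,n) -> R) (g : 'M[R]_(m,n) -> R)
  (A : 'M[R]_(m,d)) (X : 'M[R]_(m,n)) (t : R) Z E l Z' E' l' :
  0 < t -> convex_fun f -> convex_fun g ->
  dladmm_step f g A X A (const_mx t) (const_mx 1) Z E l Z' E' l' ->
  [/\ subgrad f Z' (t *: (Z - Z') - A^T *m (l + (A *m Z + E - X))),
      subgrad g E' (- l') & l' = l + (A *m Z' + E' - X)].
Proof.
move=> t0 cf cg; rewrite /dladmm_step /= => -[hZ hE hl].
rewrite !hadm_const !einv_const !hadm_const !scale1r invr1 scale1r in hZ hE hl.
split => //.
- set C := Z - t^-1 *: (A^T *m (l + (A *m Z + E - X))).
  have -> : t *: (Z - Z') - A^T *m (l + (A *m Z + E - X)) = t *: (C - Z').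
    rewrite /C; move: (A^T *m _) => P; apply/matrixP => i j; rewrite !mxE; field.
    by rewrite gt_eqF.
  apply: opt_subgrad => //; first exact: ltW.
  move=> Y; have := hZ Y; rewrite !wsq_const.
  have eqV : forall V : 'M[R]_(d,n), V - Z + t^-1 *: (A^T *m (l + (A *m Z + E - X))) = V - C.
    by move=> V; rewrite /C; move: (A^T *m _) => P; apply/matrixP => i j; rewrite !mxE; ring.
  by rewrite !eqV.
- set C := X - A *m Z' - l.
  have -> : - l' = 1 *: (C - E').
    rewrite scale1r hl /C; move: (A *m Z') => P; apply/matrixP => i j; rewrite !mxE; ring.
  apply: opt_subgrad => //.
  move=> Y; have := hE Y; rewrite !wsq_const.
  have eqV : forall V : 'M[R]_(m,n), V - X + A *m Z' + l = V - C.
    by move=> V; rewrite /C; move: (A *m Z') => P; apply/matrixP => i j; rewrite !mxE; ring.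
  by rewrite !eqV.
Qed.
Lemma fejer_step (R : realType) m d n (f : 'M[R]_(d,n) -> R) (g : 'M[R]_(m,n) -> R)
  (A : 'M[R]_(m,d)) (X : 'M[R]_(m,n)) (t : R) Zs Es ls Z0 E0 l0 Z1 E1 l1 :
  subgrad f Zs (- (A^T *m ls)) -> subgrad g Es (- ls) -> A *m Zs + Es = X ->
  subgrad g E0 (- l0) ->
  subgrad f Z1 (t *: (Z0 - Z1) - A^T *m (l0 + (A *m Z0 + E0 - X))) ->
  subgrad g E1 (- l1) -> l1 = l0 + (A *m Z1 + E1 - X) ->
  Qf A t (Z1 - Zs) (E1 - Es) (l1 - ls) + Qf A t (Z1 - Z0) (E1 - E0) (l1 - l0)
    <= Qf A t (Z0 - Zs) (E0 - Es) (l0 - ls).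
Proof.
move=> hfs hgs hX hg0 hf1 hg1 hl.
have H := @fejer_core R m d n A t (Z1 - Zs) (Z1 - Z0) (E1 - Es) (E1 - E0) (l1 - ls) (l1 - l0).
have e1 : forall (U V W : 'M[R]_(d,n)), (U - W) - (U - V) = V - W.
  by move=> U V W; apply/matrixP => i j; rewrite !mxE; ring.
have e2 : forall (U V W : 'M[R]_(m,n)), (U - W) - (U - V) = V - W.
  by move=> U V W; apply/matrixP => i j; rewrite !mxE; ring.
rewrite e1 !e2 in H.
suff : 0 <= Qf A t (Z0 - Zs) (E0 - Es) (l0 - ls) - Qf A t (Z1 - Zs) (E1 - Es) (l1 - ls) -
   Qf A t (Z1 - Z0) (E1 - E0) (l1 - l0) by lra.
apply: H.
- rewrite hl -hX mulmxBr; move: (A *m Z1) (A *m Zs) => P Q.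
  by apply/matrixP => i j; rewrite !mxE; ring.
- have M := subgrad_mono hf1 hfs.
  suff -> : - (t *: (Z1 - Z0)) - A^T *m (l1 - ls - A *m (Z1 - Z0) - (E1 - E0)) =
    t *: (Z0 - Z1) - A^T *m (l0 + (A *m Z0 + E0 - X)) - - (A^T *m ls) by [].
  have inner : l1 - ls - A *m (Z1 - Z0) - (E1 - E0) = (l0 + (A *m Z0 + E0 - X)) - ls.
    rewrite hl mulmxBr; move: (A *m Z1) (A *m Z0) => P Q.
    by apply/matrixP => i j; rewrite !mxE; ring.
  rewrite inner mulmxBr; move: (A^T *m _) (A^T *m ls) => P Q.
  by apply/matrixP => i j; rewrite !mxE; ring.
- have M := subgrad_mono hg1 hgs.
  suff -> : - (l1 - ls) = - l1 - - ls by [].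
  by apply/matrixP => i j; rewrite !mxE; ring.
- have M := subgrad_mono hg1 hg0.
  suff -> : - (l1 - l0) = - l1 - - l0 by [].
  by apply/matrixP => i j; rewrite !mxE; ring.
Qed.
Lemma entry_le_norm (R : realType) p q (M : 'M[R]_(p,q)) i j : `|M i j| <= `|M|.
Proof.
by rewrite [leRHS]/Num.Def.normr /= mx_normrE; apply/bigmax_geP; right; exists (i, j).
Qed.

Lemma cluster_rV (R : realType) (N : nat) (v : nat -> 'rV[R]_N) (M : R) :
  (forall k i, `|v k ord0 i| <= M) ->
  exists vb : 'rV[R]_N, forall eta, 0 < eta -> forall K, exists k,
    (K <= k)%N /\ forall i, `|v k ord0 i - vb ord0 i| < eta.
Proof.
move=> vM.
have cS := @rV_compact _ N (fun _ => `[- M, M]%classic) (fun _ => @segment_compact _ (- M) M).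
have FS : (v @ \oo) [set w : 'rV[R]_N | forall i, `[- M, M]%classic (w ord0 i)].
  exists 0%N => // k _ i /=; rewrite in_itv /= -ler_norml; exact: vM.
have [vb [_ cl]] := cS _ _ FS.
exists vb => eta eta0 K.
have FA : (v @ \oo) (v @` [set k | (K <= k)%N]).
  by exists K => // k /= hk; exists k.
have [w [[k /= hk <-] hb]] := cl _ _ FA (@nbhsx_ballx _ _ vb eta eta0).
exists k; split => // i.
have h1 := entry_le_norm (vb - v k) ord0 i.
have h2 : `|vb - v k| < eta by move: hb; rewrite -ball_normE.
rewrite distrC; move: h1; rewrite !mxE => h1; exact: le_lt_trans h1 h2.
Qed.
Lemma cluster3 (R : realType) a b c e (Z : nat -> 'M[R]_(a,b)) (E L : nat -> 'M[R]_(c,e)) (M : R) :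
  (forall k i j, `|Z k i j| <= M) -> (forall k i j, `|E k i j| <= M) ->
  (forall k i j, `|L k i j| <= M) ->
  exists (Zb : 'M[R]_(a,b)) (Eb Lb : 'M[R]_(c,e)), forall eta, 0 < eta -> forall K, exists k, (K <= k)%N /\
    [/\ (forall i j, `|Z k i j - Zb i j| < eta), (forall i j, `|E k i j - Eb i j| < eta)
      & (forall i j, `|L k i j - Lb i j| < eta)].
Proof.
move=> hZ hE hL.
pose v k := row_mx (mxvec (Z k)) (row_mx (mxvec (E k)) (mxvec (L k))).
have vM : forall k i, `|v k ord0 i| <= M.
  move=> k i; rewrite /v; case: (splitP i) => [i' hi|i' hi].
    rewrite (_ : i = lshift _ i'); last exact: ord_inj.
    by rewrite row_mxEl; clear hi; case/mxvec_indexP: i' => i1 j1; rewrite mxvecE.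
  rewrite (_ : i = rshift _ i'); last exact: ord_inj.
  rewrite row_mxEr; case: (splitP i') => [i2 hi2|i2 hi2].
    rewrite (_ : i' = lshift _ i2); last exact: ord_inj.
    by rewrite row_mxEl; clear hi hi2; case/mxvec_indexP: i2 => i1 j1; rewrite mxvecE.
  rewrite (_ : i' = rshift _ i2); last exact: ord_inj.
  by rewrite row_mxEr; clear hi hi2; case/mxvec_indexP: i2 => i1 j1; rewrite mxvecE.
have [vb Hvb] := cluster_rV vM.
exists (vec_mx (lsubmx vb)), (vec_mx (lsubmx (rsubmx vb))), (vec_mx (rsubmx (rsubmx vb))).
move=> eta eta0 K; have [k [hk H]] := Hvb eta eta0 K.
exists k; split => //; split => i j.
- have := H (lshift _ (mxvec_index i j)).
  by rewrite /v row_mxEl mxvecE !mxE.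
- have := H (rshift _ (lshift _ (mxvec_index i j))).
  by rewrite /v row_mxEr row_mxEl mxvecE !mxE.
- have := H (rshift _ (rshift _ (mxvec_index i j))).
  by rewrite /v row_mxEr row_mxEr mxvecE !mxE.
Qed.
Lemma noninc_le (R : realType) (V : nat -> R) : (forall k, V k.+1 <= V k) ->
  forall k j, (k <= j)%N -> V j <= V k.
Proof.
move=> h k j /subnK <-; elim: (j - k)%N => [|i IH]; first by rewrite add0n.
by rewrite addSn; apply: le_trans (h _) IH.
Qed.

Lemma tail_small (R : realType) (V D : nat -> R) : (forall k, 0 <= V k) ->
  (forall k, 0 <= D k) -> (forall k, V k.+1 + D k <= V k) ->
  forall eps, 0 < eps -> exists N, forall k, (N <= k)%N -> D k <= eps.
Proof.
move=> V0 D0 h eps e0.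
have mono : forall k, V k.+1 <= V k by move=> k; have := h k; have := D0 k; lra.
have hi : has_inf (range V).
  by split; [exists (V 0%N), 0%N | exists 0 => _ [k _ <-]].
have [_ [N _ <-] hN] := inf_adherent e0 hi.
exists N => k hk.
have h1 := noninc_le mono hk.
have h2 : inf (range V) <= V k.+1 by apply: ge_inf; [case: hi | exists k.+1].
have := h k; lra.
Qed.
Lemma nsq_add (R : realType) p q (x y : 'M[R]_(p,q)) :
  frob (x + y) (x + y) <= 2 * frob x x + 2 * frob y y.
Proof.
have h := frob_ge0 (x - y); rewrite frob_sq_sub in h; rewrite frob_sq_add; lra.
Qed.

Lemma nsq_scale (R : realType) p q (a : R) (x : 'M[R]_(p,q)) :
  frob (a *: x) (a *: x) = a ^+ 2 * frob x x.
Proof. by rewrite frobZl frobZr mulrA expr2. Qed.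

Lemma nsq_opp (R : realType) p q (x : 'M[R]_(p,q)) : frob (- x) (- x) = frob x x.
Proof. by rewrite frobNl frobNr opprK. Qed.

Lemma frob_trmx (R : realType) p q (x y : 'M[R]_(p,q)) : frob x^T y^T = frob x y.
Proof. by rewrite /frob exchange_big; apply: eq_bigr => i _; apply: eq_bigr => j _; rewrite !mxE. Qed.

Lemma frob_abs (R : realType) p q (x y : 'M[R]_(p,q)) :
  `|frob x y| <= Num.sqrt (frob x x) * Num.sqrt (frob y y).
Proof.
rewrite -sqrtrM ?frob_ge0 // -(sqrtr_sqr (frob x y)).
by apply: ler_wsqrtr; exact: frob_CS.
Qed.

Lemma entry_near (R : realType) p q (M : 'M[R]_(p,q)) (eta : R) :
  (forall i j, `|M i j| <= eta) -> frob M M <= (p * q)%:R * eta ^+ 2.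
Proof.
move=> h.
have e : (p * q)%:R * eta ^+ 2 = \sum_(i < p) \sum_(j < q) eta ^+ 2.
  rewrite natrM -mulrA; under eq_bigr => i _ do rewrite sumr_const card_ord -mulr_natl.
  by rewrite sumr_const card_ord mulr_natl.
rewrite e; apply: ler_sum => i _; apply: ler_sum => j _.
have hx := h i j; have nK := real_normK (num_real (M i j)).
have n0 : 0 <= `|M i j| by [].
rewrite !expr2 in nK *; nra.
Qed.

Lemma near_entry (R : realType) p q (M : 'M[R]_(p,q)) (eta : R) :
  0 <= eta -> frob M M <= eta ^+ 2 -> forall i j, `|M i j| <= eta.
Proof.
move=> e0 h i j; have := le_trans (frob_entry M i j) h.
have nK := real_normK (num_real (M i j)).
have n0 : 0 <= `|M i j| by [].
rewrite !expr2 in nK *; nra.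
Qed.

Lemma le_eps (R : realType) (a b : R) : (forall eps, 0 < eps -> a <= b + eps) -> a <= b.
Proof.
move=> h; rewrite leNgt; apply/negP => ab.
have := h ((a - b) / 2); rewrite divr_gt0 ?subr_gt0 // => /(_ isT); lra.
Qed.
Lemma sqrt_le_sq (R : realType) (x s : R) : 0 <= s -> x <= s ^+ 2 -> Num.sqrt x <= s.
Proof.
move=> s0 h; apply: le_trans (ler_wsqrtr h) _.
by rewrite sqrtr_sqr ger0_norm.
Qed.

Lemma subgrad_limit (R : realType) p q (f : 'M[R]_(p,q) -> R) (Zb Gb : 'M[R]_(p,q)) :
  convex_fun f ->
  (forall delta, 0 < delta -> exists Z' G', [/\ frob (Z' - Zb) (Z' - Zb) <= delta,
      frob (G' - Gb) (G' - Gb) <= delta & subgrad f Z' G']) ->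
  subgrad f Zb Gb.
Proof.
move=> cf H Y; apply: le_eps => eps e0.
have e20 : 0 < eps / 2 by rewrite divr_gt0.
have [eta [eta0 Hl]] := convex_lsc Zb cf e20.
set K1 := Num.sqrt (frob Gb Gb).
set K2 := Num.sqrt (frob (Y - Zb) (Y - Zb)).
have K10 : 0 <= K1 by exact: sqrtr_ge0.
have K20 : 0 <= K2 by exact: sqrtr_ge0.
set s := Order.min (Order.min 1 eta) (eps / 2 / (K1 + K2 + 1)).
have s0 : 0 < s by rewrite /s !lt_min ltr01 eta0 /= divr_gt0 //; lra.
have s1 : s <= 1 by rewrite /s !ge_min lexx.
have seta : s <= eta by rewrite /s !ge_min lexx orbT.
have sK : s * (K1 + K2 + 1) <= eps / 2.
  have : s <= eps / 2 / (K1 + K2 + 1) by rewrite /s ge_min lexx orbT.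
  by rewrite ler_pdivlMr; lra.
have [Z' [G' [hZ hG hs]]] := H (s ^+ 2) (exprn_gt0 _ s0).
set a := Z' - Zb in hZ; set b := G' - Gb in hG.
have sa : Num.sqrt (frob a a) <= s by apply: sqrt_le_sq => //; exact: ltW.
have sb : Num.sqrt (frob b b) <= s by apply: sqrt_le_sq => //; exact: ltW.
have lsc : f Zb <= f Z' + eps / 2.
  apply: Hl => i j; have := near_entry (ltW s0) hZ i j; rewrite /a !mxE => h.
  exact: le_trans h seta.
have sub := hs Y.
have eG : G' = Gb + b by rewrite /b addrC subrK.
have eY : Y - Z' = (Y - Zb) - a by rewrite /a opprB addrA subrK.
rewrite eG eY in sub.
have b1 : frob Gb a <= K1 * s.
  apply: le_trans (ler_norm _) _; apply: le_trans (frob_abs _ _) _.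
  by apply: ler_wpM2l.
have b2 : - frob b (Y - Zb) <= s * K2.
  apply: le_trans (ler_norm _) _; rewrite normrN.
  apply: le_trans (frob_abs _ _) _; apply: ler_wpM2r => //.
have b3 : frob b a <= s * s.
  apply: le_trans (ler_norm _) _; apply: le_trans (frob_abs _ _) _.
  apply: ler_pM => //; exact: sqrtr_ge0.
have ss : s * s <= s by rewrite -[X in _ <= X]mulr1 ler_wpM2l //; exact: ltW.
have sK' : K1 * s + s * K2 + s <= eps / 2 by move: sK; rewrite mulrDr mulrDr mulr1 (mulrC s K1).
move: sub b1 b2 b3; set c := Y - Zb; clearbody a b c.
rewrite frobDl !frobBr => sub b1 b2 b3.
lra.
Qed.
Lemma Qf_lb (R : realType) m d n (A : 'M[R]_(m,d)) (Z : 'M[R]_(d,n)) (E L : 'M[R]_(m,n)) :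
  frob Z Z + frob E E + frob L L <= Qf A (1 + frob A A) Z E L.
Proof.
rewrite /Qf; have := frob_mul_le A Z; have := frob_ge0 Z; nra.
Qed.

Lemma Qf_ub (R : realType) m d n (A : 'M[R]_(m,d)) (Z : 'M[R]_(d,n)) (E L : 'M[R]_(m,n)) :
  Qf A (1 + frob A A) Z E L <= (1 + frob A A) * (frob Z Z + frob E E + frob L L).
Proof.
rewrite /Qf; have := frob_ge0 (A *m Z); have := frob_ge0 A.
have := frob_ge0 E; have := frob_ge0 L; nra.
Qed.

Lemma in_S_ours (R : realType) m d n (sigma : R) (A : 'M[R]_(m,d)) :
  0 <= sigma -> in_S sigma A A (const_mx (1 + frob A A) : 'M[R]_(d,n)) (const_mx 1).
Proof.
move=> s0; split.
- move=> x; rewrite subrr mul0mx.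
  have -> : vnorm2 (0 : 'cV[R]_m) = 0.
    by rewrite /vnorm2 big1 ?sqrtr0 // => i _; rewrite mxE expr2 mul0r.
  by apply: mulr_ge0 => //; exact: sqrtr_ge0.
- by move=> i j; rewrite mxE; have := frob_ge0 A; lra.
- by move=> i j; rewrite mxE ltr01.
- move=> Z Z0; rewrite !hadm_const scale1r frobBl frobZl frob_adj.
  have h1 := frob_mul_le A Z.
  have h2 : 0 < frob Z Z.
    by rewrite lt0r frob_ge0 andbT; apply/eqP => /frob_eq0 h; rewrite h eqxx in Z0.
  nra.
Qed.

Lemma cvg_from_nsq (R : realType) p q (Z : nat -> 'M[R]_(p,q)) (Zb : 'M[R]_(p,q)) :
  (forall eps, 0 < eps -> exists N, forall j, (N <= j)%N -> frob (Z j - Zb) (Z j - Zb) <= eps) ->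
  Z @ \oo --> Zb.
Proof.
move=> H; apply/cvgrPdist_lt => eps e0.
have e2 : 0 < eps / 2 by rewrite divr_gt0.
have [N HN] := H ((eps / 2) ^+ 2) (exprn_gt0 _ e2).
exists N => // j hj.
rewrite [`|_|]/Num.Def.normr /= mx_normrE; apply: bigmax_lt => // ij _.
have := near_entry (ltW e2) (HN j hj) ij.1 ij.2; rewrite !mxE distrC => h.
apply: le_lt_trans h _; lra.
Qed.
Lemma entry_bound (R : realType) p q (Y Ys : 'M[R]_(p,q)) (B S : R) :
  0 <= B -> frob (Y - Ys) (Y - Ys) <= B -> frob Ys Ys <= S ->
  forall i j, `|Y i j| <= B + 1 + (S + 1).
Proof.
move=> B0 h hS i j.
have h1 : `|(Y - Ys) i j| <= B + 1.
  apply: near_entry; first lra.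
  apply: le_trans h _; nra.
have h2 : `|Ys i j| <= S + 1.
  have := le_trans (frob_entry Ys i j) hS.
  have nK := real_normK (num_real (Ys i j)); have n0 : 0 <= `|Ys i j| by [].
  rewrite !expr2 in nK *; nra.
have -> : Y i j = (Y - Ys) i j + Ys i j by rewrite !mxE subrK.
apply: le_trans (ler_normD _ _) _; lra.
Qed.

Lemma main_conv (R : realType) m d n (f : 'M[R]_(d,n) -> R) (g : 'M[R]_(m,n) -> R)
  (A : 'M[R]_(m,d)) (X : 'M[R]_(m,n)) (Z : nat -> 'M[R]_(d,n)) (E l : nat -> 'M[R]_(m,n))
  Zs Es ls :
  convex_fun f -> convex_fun g ->
  subgrad f Zs (- (A^T *m ls)) -> subgrad g Es (- ls) -> A *m Zs + Es = X ->
  (forall k, [/\ subgrad f (Z k.+1) ((1 + frob A A) *: (Z k - Z k.+1) - A^T *m (l k + (A *m Z k + E k - X))),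
     subgrad g (E k.+1) (- l k.+1) & l k.+1 = l k + (A *m Z k.+1 + E k.+1 - X)]) ->
  exists Zb Eb Lb, in_Omega f g A X Zb Eb Lb /\
    [/\ Z @ \oo --> Zb, E @ \oo --> Eb & l @ \oo --> Lb].
Proof.
move=> cf cg hfs hgs hX hst.
have SA0 : 0 <= frob A A := frob_ge0 A.
set SA := frob A A in SA0 hst *.
set t := 1 + SA in hst *.
have t1 : 1 <= t by rewrite /t; lra.
have FJ : forall Zb Eb Lb, subgrad f Zb (- (A^T *m Lb)) -> subgrad g Eb (- Lb) ->
    A *m Zb + Eb = X -> forall k,
    Qf A t (Z k.+2 - Zb) (E k.+2 - Eb) (l k.+2 - Lb) +
    Qf A t (Z k.+2 - Z k.+1) (E k.+2 - E k.+1) (l k.+2 - l k.+1) <=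
    Qf A t (Z k.+1 - Zb) (E k.+1 - Eb) (l k.+1 - Lb).
  move=> Zb Eb Lb h1 h2 h3 k; have [_ hg0 _] := hst k; have [hf1 hg1 hl1] := hst k.+1.
  exact: fejer_step h1 h2 h3 hg0 hf1 hg1 hl1.
have Qge : forall (Z1 : 'M[R]_(d,n)) (E1 L1 : 'M[R]_(m,n)),
    frob Z1 Z1 + frob E1 E1 + frob L1 L1 <= Qf A t Z1 E1 L1 := fun Z1 E1 L1 => Qf_lb A Z1 E1 L1.
have Qle : forall (Z1 : 'M[R]_(d,n)) (E1 L1 : 'M[R]_(m,n)),
    Qf A t Z1 E1 L1 <= t * (frob Z1 Z1 + frob E1 E1 + frob L1 L1) := fun Z1 E1 L1 => Qf_ub A Z1 E1 L1.
have Q0 : forall (Z1 : 'M[R]_(d,n)) (E1 L1 : 'M[R]_(m,n)), 0 <= Qf A t Z1 E1 L1.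
  move=> Z1 E1 L1; apply: le_trans (Qge Z1 E1 L1).
  by rewrite !addr_ge0 ?frob_ge0.
pose V k := Qf A t (Z k.+1 - Zs) (E k.+1 - Es) (l k.+1 - ls).
pose D k := Qf A t (Z k.+2 - Z k.+1) (E k.+2 - E k.+1) (l k.+2 - l k.+1).
have VD : forall k, V k.+1 + D k <= V k := FJ _ _ _ hfs hgs hX.
have Dsmall := tail_small (fun k => Q0 _ _ _) (fun k => Q0 _ _ _) VD.
have Vmono : forall k, V k.+1 <= V k.
  by move=> k; have := VD k; have := Q0 (Z k.+2 - Z k.+1) (E k.+2 - E k.+1) (l k.+2 - l k.+1); rewrite -/(D k); lra.
have VB : forall k, V k <= V 0%N by move=> k; exact: (@noninc_le _ V Vmono 0%N k (leq0n k)).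
set B := V 0%N in VB.
have B0 : 0 <= B by exact: Q0.
set S := frob Zs Zs + frob Es Es + frob ls ls.
have fZs : frob Zs Zs <= S by rewrite /S; have := frob_ge0 Es; have := frob_ge0 ls; lra.
have fEs : frob Es Es <= S by rewrite /S; have := frob_ge0 Zs; have := frob_ge0 ls; lra.
have fls : frob ls ls <= S by rewrite /S; have := frob_ge0 Es; have := frob_ge0 Zs; lra.
have Vk : forall k, [/\ frob (Z k.+1 - Zs) (Z k.+1 - Zs) <= B,
    frob (E k.+1 - Es) (E k.+1 - Es) <= B & frob (l k.+1 - ls) (l k.+1 - ls) <= B].
  move=> k; have := Qge (Z k.+1 - Zs) (E k.+1 - Es) (l k.+1 - ls); rewrite -/(V k).
  have := VB k; have := frob_ge0 (Z k.+1 - Zs); have := frob_ge0 (E k.+1 - Es).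
  have := frob_ge0 (l k.+1 - ls); split; lra.
have [Zb [Eb [Lb HC]]] := @cluster3 R d n m n (fun k => Z k.+1) (fun k => E k.+1)
    (fun k => l k.+1) (B + 1 + (S + 1))
    (fun k => let: And3 h _ _ := Vk k in entry_bound B0 h fZs)
    (fun k => let: And3 _ h _ := Vk k in entry_bound B0 h fEs)
    (fun k => let: And3 _ _ h := Vk k in entry_bound B0 h fls).
set P : R := (d * n + m * n)%:R + 1.
have P0 : 1 <= P by rewrite /P; have := ler0n R (d * n + m * n); lra.
have HCn : forall delta, 0 < delta -> forall K, exists k, (K <= k)%N /\
    [/\ frob (Z k.+1 - Zb) (Z k.+1 - Zb) <= delta, frob (E k.+1 - Eb) (E k.+1 - Eb) <= delta
      & frob (l k.+1 - Lb) (l k.+1 - Lb) <= delta].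
  move=> delta d0 K.
  set eta := Order.min 1 (delta / P).
  have eta0 : 0 < eta by rewrite /eta lt_min ltr01 /= divr_gt0 //; lra.
  have eta1 : eta <= 1 by rewrite /eta ge_min lexx.
  have etad : eta <= delta / P by rewrite /eta ge_min lexx orbT.
  have etaP : P * eta ^+ 2 <= delta.
    have : eta * eta <= 1 * (delta / P) by apply: ler_pM => //; exact: ltW.
    rewrite mul1r -expr2 => h; apply: le_trans (ler_wpM2l (le_trans ler01 P0) h) _.
    by rewrite mulrCA divff ?mulr1 //; apply: lt0r_neq0; lra.
  have [k [hk [h1 h2 h3]]] := HC eta eta0 K.
  have dn : forall a : nat, (a <= d * n + m * n)%N -> (a%:R : R) * eta ^+ 2 <= delta.
    move=> a hab; apply: le_trans etaP; apply: ler_wpM2r; first exact: sqr_ge0.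
    have : (a%:R : R) <= (d * n + m * n)%:R by rewrite ler_nat.
    rewrite /P; lra.
  exists k; split => //; split.
  - have e' : forall i j, `|(Z k.+1 - Zb) i j| <= eta by move=> i j; rewrite !mxE; exact: ltW (h1 i j).
    apply: le_trans (entry_near e') _.
    by apply: dn; rewrite leq_addr.
  - have e' : forall i j, `|(E k.+1 - Eb) i j| <= eta by move=> i j; rewrite !mxE; exact: ltW (h2 i j).
    apply: le_trans (entry_near e') _.
    by apply: dn; rewrite leq_addl.
  - have e' : forall i j, `|(l k.+1 - Lb) i j| <= eta by move=> i j; rewrite !mxE; exact: ltW (h3 i j).
    apply: le_trans (entry_near e') _.
    by apply: dn; rewrite leq_addl.
have HK : forall delta, 0 < delta -> exists k,
    [/\ frob (Z k.+1 - Zb) (Z k.+1 - Zb) <= delta, frob (E k.+1 - Eb) (E k.+1 - Eb) <= delta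
      & frob (l k.+1 - Lb) (l k.+1 - Lb) <= delta] /\
    [/\ frob (Z k.+2 - Z k.+1) (Z k.+2 - Z k.+1) <= delta,
        frob (E k.+2 - E k.+1) (E k.+2 - E k.+1) <= delta
      & frob (l k.+2 - l k.+1) (l k.+2 - l k.+1) <= delta].
  move=> delta d0; have [N HN] := Dsmall delta d0.
  have [k [hk hh]] := HCn delta d0 N.
  exists k; split => //.
  have := HN k hk; have := Qge (Z k.+2 - Z k.+1) (E k.+2 - E k.+1) (l k.+2 - l k.+1).
  have := frob_ge0 (Z k.+2 - Z k.+1); have := frob_ge0 (E k.+2 - E k.+1).
  have := frob_ge0 (l k.+2 - l k.+1); split; lra.
have hXb : A *m Zb + Eb = X.
  suff h0 : frob (A *m Zb + Eb - X) (A *m Zb + Eb - X) = 0.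
    by move/frob_eq0/eqP: h0; rewrite subr_eq0 => /eqP.
  apply/eqP; rewrite eq_le frob_ge0 andbT; apply: le_eps => eps e0; rewrite add0r.
  set C3 : R := 13 + 16 * SA.
  have C30 : 0 < C3 by rewrite /C3; lra.
  have [k [[h1 h2 h3] [s1 s2 s3]]] := HK (eps / C3) (divr_gt0 e0 C30).
  have [_ _ hl] := hst k.+1.
  have eR : A *m Zb + Eb - X = (l k.+2 - l k.+1) - A *m ((Z k.+1 - Zb) + (Z k.+2 - Z k.+1))
      - ((E k.+1 - Eb) + (E k.+2 - E k.+1)).
    rewrite hl (_ : (Z k.+1 - Zb) + (Z k.+2 - Z k.+1) = Z k.+2 - Zb); last first.
      by apply/matrixP => i j; rewrite !mxE; ring.
    rewrite mulmxBr; move: (A *m Z k.+2) (A *m Zb) => P1 P2.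
    by apply/matrixP => i j; rewrite !mxE; ring.
  rewrite eR.
  move: (Z k.+1 - Zb) (Z k.+2 - Z k.+1) (E k.+1 - Eb) (E k.+2 - E k.+1) (l k.+2 - l k.+1)
    h1 h2 s1 s2 s3 => dZ sZ dE sE sL h1 h2 s1 s2 s3.
  have b1 := nsq_add dZ sZ.
  have b2 := frob_mul_le A (dZ + sZ); rewrite -/SA in b2.
  have b3 := nsq_add dE sE.
  have b4 := nsq_add (sL - A *m (dZ + sZ)) (- (dE + sE)); rewrite nsq_opp in b4.
  have b5 := nsq_add sL (- (A *m (dZ + sZ))); rewrite nsq_opp in b5.
  have b6 : SA * frob (dZ + sZ) (dZ + sZ) <= SA * (4 * (eps / C3)) by apply: ler_wpM2l => //; lra.
  have e3 : C3 * (eps / C3) = eps by rewrite mulrC divfK // gt_eqF.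
  have ep0 : 0 <= SA * (eps / C3) by apply: mulr_ge0 => //; apply: divr_ge0; lra.
  move: (eps / C3) h1 h2 s1 s2 s3 b6 e3 ep0 => dl h1 h2 s1 s2 s3 b6 e3 ep0.
  rewrite /C3 in e3; have := le_trans (frob_ge0 _) h1; nra.
have hfb : subgrad f Zb (- (A^T *m Lb)).
  apply: subgrad_limit cf _ => delta d0.
  set C1 : R := 2 * t ^+ 2 + 12 * SA + 8 * SA ^+ 2 + 4.
  have C10 : 0 < C1 by rewrite /C1; have := sqr_ge0 t; have := sqr_ge0 SA; lra.
  have [k [[h1 h2 h3] [s1 s2 s3]]] := HK (delta / C1) (divr_gt0 d0 C10).
  have [hf _ _] := hst k.+1.
  have e1 : C1 * (delta / C1) = delta by rewrite mulrC divfK // gt_eqF.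
  have dd0 : 0 <= delta / C1 by apply: divr_ge0; lra.
  exists (Z k.+2), (t *: (Z k.+1 - Z k.+2) - A^T *m (l k.+1 + (A *m Z k.+1 + E k.+1 - X))).
  split => //.
  - rewrite (_ : Z k.+2 - Zb = (Z k.+1 - Zb) + (Z k.+2 - Z k.+1)); last first.
      by apply/matrixP => i j; rewrite !mxE; ring.
    apply: le_trans (nsq_add _ _) _.
    have : 4 * (delta / C1) <= delta.
      rewrite -[X in _ <= X]e1; apply: ler_wpM2r => //; rewrite /C1.
      have := sqr_ge0 t; have := sqr_ge0 SA; lra.
    lra.
  - have inner : (l k.+1 - Lb) + A *m (Z k.+1 - Zb) + (E k.+1 - Eb) =
        (l k.+1 + (A *m Z k.+1 + E k.+1 - X)) - Lb.
      rewrite -hXb mulmxBr; move: (A *m Z k.+1) (A *m Zb) => P1 P2.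
      by apply/matrixP => i j; rewrite !mxE; ring.
    rewrite (_ : t *: (Z k.+1 - Z k.+2) - A^T *m (l k.+1 + (A *m Z k.+1 + E k.+1 - X))
        - - (A^T *m Lb) = - (t *: (Z k.+2 - Z k.+1))
        - A^T *m ((l k.+1 - Lb) + A *m (Z k.+1 - Zb) + (E k.+1 - Eb))); last first.
      rewrite inner mulmxBr; move: (A^T *m _) (A^T *m Lb) => P1 P2.
      by apply/matrixP => i j; rewrite !mxE; ring.
    move: (Z k.+1 - Zb) (Z k.+2 - Z k.+1) (E k.+1 - Eb) (l k.+1 - Lb)
      h1 h2 h3 s1 => dZ sZ dE dL h1 h2 h3 s1.
    set W := dL + A *m dZ + dE.
    have b1 := nsq_add (- (t *: sZ)) (- (A^T *m W)).
    rewrite !nsq_opp nsq_scale in b1.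
    have b2 := frob_mul_le A^T W; rewrite frob_trmx -/SA in b2.
    have b3 := nsq_add (dL + A *m dZ) dE.
    have b4 := nsq_add dL (A *m dZ).
    have b5 := frob_mul_le A dZ; rewrite -/SA in b5.
    have b6 : SA * frob dZ dZ <= SA * (delta / C1) by apply: ler_wpM2l.
    have b7 : frob W W <= (6 + 4 * SA) * (delta / C1) by rewrite /W; lra.
    have b8 : SA * frob W W <= SA * ((6 + 4 * SA) * (delta / C1)) by apply: ler_wpM2l.
    have b9 : t ^+ 2 * frob sZ sZ <= t ^+ 2 * (delta / C1) by apply: ler_wpM2l => //; exact: sqr_ge0.
    apply: le_trans b1 _.
    rewrite -[X in _ <= X]e1 /C1.
    have ee : SA * ((6 + 4 * SA) * (delta / C1)) = 6 * (SA * (delta / C1)) + 4 * (SA ^+ 2 * (delta / C1)) by ring.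
    rewrite ee in b8.
    have q1 : 0 <= SA * (delta / C1) by apply: mulr_ge0.
    have q2 : 0 <= SA ^+ 2 * (delta / C1) by apply: mulr_ge0 => //; exact: sqr_ge0.
    have ee2 : (2 * t ^+ 2 + 12 * SA + 8 * SA ^+ 2 + 4) * (delta / C1) =
      2 * (t ^+ 2 * (delta / C1)) + 12 * (SA * (delta / C1)) + 8 * (SA ^+ 2 * (delta / C1)) + 4 * (delta / C1) by ring.
    rewrite ee2; lra.
have hgb : subgrad g Eb (- Lb).
  apply: subgrad_limit cg _ => delta d0.
  have [k [[h1 h2 h3] [s1 s2 s3]]] := HK (delta / 4) (divr_gt0 d0 (ltr0n _ 4)).
  have [_ hg _] := hst k.+1.
  exists (E k.+2), (- l k.+2); split => //.
  - rewrite (_ : E k.+2 - Eb = (E k.+1 - Eb) + (E k.+2 - E k.+1)); last first.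
      by apply/matrixP => i j; rewrite !mxE; ring.
    apply: le_trans (nsq_add _ _) _; lra.
  - rewrite (_ : - l k.+2 - - Lb = - ((l k.+1 - Lb) + (l k.+2 - l k.+1))); last first.
      by apply/matrixP => i j; rewrite !mxE; ring.
    rewrite nsq_opp; apply: le_trans (nsq_add _ _) _; lra.
have FJb := FJ Zb Eb Lb hfb hgb hXb.
pose Vb k := Qf A t (Z k.+1 - Zb) (E k.+1 - Eb) (l k.+1 - Lb).
have Vbmono : forall k, Vb k.+1 <= Vb k.
  move=> k; have := FJb k.
  have := Q0 (Z k.+2 - Z k.+1) (E k.+2 - E k.+1) (l k.+2 - l k.+1); rewrite /Vb; lra.
have conv : forall eps, 0 < eps -> exists N, forall j, (N <= j)%N ->
    [/\ frob (Z j - Zb) (Z j - Zb) <= eps, frob (E j - Eb) (E j - Eb) <= eps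
      & frob (l j - Lb) (l j - Lb) <= eps].
  move=> eps e0.
  have t0 : 0 < 3 * t by lra.
  have [k [_ [h1 h2 h3]]] := HCn (eps / (3 * t)) (divr_gt0 e0 t0) 0%N.
  have Vbk : Vb k <= eps.
    apply: le_trans (Qle _ _ _) _.
    have e3 : t * (3 * (eps / (3 * t))) = eps.
      rewrite (_ : t * (3 * (eps / (3 * t))) = (eps / (3 * t)) * (3 * t)); last by ring.
      by rewrite divfK // gt_eqF.
    rewrite -[X in _ <= X]e3; apply: ler_wpM2l; lra.
  exists k.+1 => -[//|j] hj.
  have := @noninc_le _ Vb Vbmono k j hj.
  have := Qge (Z j.+1 - Zb) (E j.+1 - Eb) (l j.+1 - Lb).
  have := frob_ge0 (Z j.+1 - Zb); have := frob_ge0 (E j.+1 - Eb).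
  have := frob_ge0 (l j.+1 - Lb); rewrite /Vb in Vbk *; split; lra.
exists Zb, Eb, Lb; split.
  split; [exists (- (A^T *m Lb)) | exists (- Lb) | exact: hXb]; split => //; by rewrite addNr.
split; apply: cvg_from_nsq => eps e0; have [N HN] := conv eps e0; exists N => j hj;
  by case: (HN j hj).
Qed.

Unset Implicit Arguments. Set Strict Implicit.

Theorem theorem1 (R : realType) (m d n : nat) (A : 'M[R]_(m, d)) (X : 'M[R]_(m, n))
  (f : 'M[R]_(d, n) -> R) (g : 'M[R]_(m, n) -> R) (c : R) :
  convex_fun f -> convex_fun g ->
  (forall s : R, 0 <= s -> s <= c -> exists (W : 'M[R]_(m, d)) (th : 'M[R]_(d, n)) (be : 'M[R]_(m, n)), in_S s A W th be) ->
  (exists Zs Es ls, in_Omega f g A X Zs Es ls) ->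
  forall sigma : R, 0 <= sigma -> sigma <= c ->
  forall (Z0 : 'M[R]_(d, n)) (E0 : 'M[R]_(m, n)) (l0 : 'M[R]_(m, n)),
  exists (W : nat -> 'M[R]_(m, d)) (th : nat -> 'M[R]_(d, n)) (be : nat -> 'M[R]_(m, n)),
    (forall k, in_S sigma A (W k) (th k) (be k)) /\
    forall (Z : nat -> 'M[R]_(d, n)) (E : nat -> 'M[R]_(m, n)) (l : nat -> 'M[R]_(m, n)),
      Z 0%N = Z0 -> E 0%N = E0 -> l 0%N = l0 ->
      (forall k, dladmm_step f g A X (W k) (th k) (be k)
                   (Z k) (E k) (l k) (Z k.+1) (E k.+1) (l k.+1)) ->
      exists Zs Es ls, in_Omega f g A X Zs Es ls /\
        [/\ Z @ \oo --> Zs, E @ \oo --> Es & l @ \oo --> ls].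
Proof.
move=> cf cg _ [Zs [Es [ls [[G [hG eG]] [H [hH eH]] hX]]]] sigma s0 sc Z0 E0 l0.
exists (fun _ => A), (fun _ => const_mx (1 + frob A A)), (fun _ => const_mx 1).
split; first by move=> k; exact: in_S_ours.
move=> Z E l _ _ _ hstep.
have t0 : 0 < 1 + frob A A by have := frob_ge0 A; lra.
have eG' : G = - (A^T *m ls) by apply/eqP; rewrite -addr_eq0 eG.
have eH' : H = - ls by apply/eqP; rewrite -addr_eq0 eH.
rewrite eG' in hG; rewrite eH' in hH.
apply: (main_conv cf cg hG hH hX) => k.
exact: step_props t0 cf cg (hstep k).
Qed.
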